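(* Let $\alpha,\beta\in\mathbb{C}$ with $\Re(\alpha)>-1$ and $\Re(\beta)>-1$, and let $n\geq 1$ be an integer. Then for all $z,w\in\mathbb{C}$ with $|z|<1$, $|w|<1$ and $w\notin(-1,0]$, $$\frac{\partial }{\partial z} P_{n}^{(\alpha ,\beta )} (z,w)+ \sqrt{w}\, \frac{\partial }{\partial w} P_{n}^{(\alpha ,\beta )} (z,w)-\frac{1+\alpha +\beta +n}{4}\, P_{n-1}^{(1+\alpha ,1+\beta )} (z,w)=0 .$$
   Context: For $\lambda\in\mathbb{C}$ and an integer $m\ge 0$, $(\lambda)_m$ denotes the Pochhammer symbol: $(\lambda)_0=1$ and $(\lambda)_m=\lambda(\lambda+1)\cdots(\lambda+m-1)$ for $m\ge1$. $\sqrt{w}$ denotes the principal branch of the square root. For $\alpha,\beta\in\mathbb{C}$ with $\Re(\alpha)>-1$, $\Re(\beta)>-1$ and an integer $n\ge 0$, the two-variable (complex bivariate) Jacobi polynomial is $$P_{n}^{(\alpha ,\beta )} (z,w)=\sum _{k=0}^{n} \frac{(1+\alpha)_{n}\, (1+\alpha +\beta)_{n+k}}{k!\,(n-k)!\,(1+\alpha)_{k}\, (1+\alpha +\beta)_{n} } \left(\frac{z-\sqrt{w} }{2} \right)^{k},$$ where the quotient $(1+\alpha+\beta)_{n+k}/(1+\alpha+\beta)_n$ is understood as $(1+\alpha+\beta+n)_k$. The symbol $P_{n-1}^{(1+\alpha ,1+\beta )}$ denotes the same polynomial with parameters $\alpha,\beta$ replaced by $1+\alpha,1+\beta$ and degree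 index $n-1$. *)

(* Defs.v *)
From Stdlib Require Import Reals Factorial.
From Coquelicot Require Import Coquelicot.
Open Scope R_scope.

Fixpoint Csum (f : nat -> C) (n : nat) : C :=
  match n with
  | O => f O
  | S m => Cplus (Csum f m) (f (S m))
  end.

Fixpoint Cpow (x : C) (m : nat) : C :=
  match m with
  | O => RtoC 1
  | S p => Cmult x (Cpow x p)
  end.

Fixpoint poch (l : C) (m : nat) : C :=
  match m with
  | O => RtoC 1
  | S p => Cmult (poch l p) (Cplus l (RtoC (INR p)))
  end.

(* Principal branch of the complex square root:
   sqrt w = sqrt((|w|+Re w)/2) + i s sqrt((|w|-Re w)/2), s = +1 if Im w >= 0, -1 otherwise.
   (Re sqrt w >= 0, and sqrt w = i sqrt|w| on the negative real axis.) *)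
Definition Csqrt (w : C) : C :=
  (sqrt ((Cmod w + Re w) / 2),
   (if Rle_dec 0 (Im w) then 1 else -1) * sqrt ((Cmod w - Re w) / 2)).

Definition jacobi2 (alpha beta : C) (n : nat) (z w : C) : C :=
  Csum (fun k =>
    Cmult
      (Cdiv (Cmult (poch (Cplus 1 alpha) n) (poch (Cplus (Cplus 1 alpha) beta + RtoC (INR n)) k))
            (Cmult (Cmult (RtoC (INR (fact k))) (RtoC (INR (fact (n - k)))))
                   (poch (Cplus 1 alpha) k)))
      (Cpow (Cdiv (Cminus z (Csqrt w)) 2) k)) n.

(* Main.v *)
Require Import Defs.
From Stdlib Require Import Reals Factorial Lra Lia.
From Coquelicot Require Import Coquelicot.
Open Scope R_scope.
Ltac cring := match goal with |- ?a = ?b => change (@eq C a b) end; ring.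

Lemma Csqrt_sq (v : C) : (Csqrt v * Csqrt v)%C = v.
Proof.
  destruct v as [x y].
  assert (Hm := re_le_Cmod (x, y)). simpl in Hm.
  assert (Hm2 := Cmod2_alt (x, y)). simpl in Hm2.
  unfold Csqrt. simpl Re; simpl Im.
  set (m := Cmod (x, y)) in *.
  apply Rabs_le_between in Hm.
  assert (H1 : 0 <= (m + x)/2) by lra.
  assert (H2 : 0 <= (m - x)/2) by lra.
  assert (Hab : sqrt ((m + x)/2) * sqrt ((m - x)/2) = Rabs (y/2)).
  { rewrite <- sqrt_mult by lra. rewrite <- sqrt_Rsqr_abs. f_equal.
    unfold Rsqr. nra. }
  pose proof (sqrt_sqrt _ H1) as E1. pose proof (sqrt_sqrt _ H2) as E2.
  unfold Cmult; simpl.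
  destruct (Rle_dec 0 y).
  - rewrite Rabs_pos_eq in Hab by lra. f_equal; nra.
  - rewrite Rabs_left in Hab by lra. f_equal; nra.
Qed.

Lemma Csqrt_re_nonneg (v : C) : 0 <= Re (Csqrt v).
Proof. unfold Csqrt; simpl. apply sqrt_pos. Qed.

Lemma Csqrt_re_pos (w : C) : ~ (Im w = 0 /\ Re w <= 0) -> 0 < Re (Csqrt w).
Proof.
  intros H. destruct w as [x y]. unfold Csqrt; simpl Re; simpl Im.
  apply sqrt_lt_R0.
  assert (Hm := re_le_Cmod (x, y)). simpl in Hm.
  assert (Hm2 := Cmod2_alt (x, y)). simpl in Hm2.
  set (m := Cmod (x, y)) in *. simpl in H.
  apply Rabs_le_between in Hm.
  destruct (Req_dec y 0) as [Hy|Hy].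
  - assert (x > 0) by (destruct (Rle_dec x 0); [exfalso; tauto| lra]). lra.
  - assert (m + x <> 0).
    { intro E. assert (y*y = 0) by nra. apply Rmult_integral in H0. tauto. }
    lra.
Qed.

Lemma is_derive_Csqrt (w : C) : 0 < Re (Csqrt w) ->
  is_derive Csqrt w (/ (RtoC 2 * Csqrt w))%C.
Proof.
  intros Hr. set (r := Re (Csqrt w)) in *.
  unfold is_derive, filterdiff. split. { apply is_linear_scal_l. }
  intros x Hx. apply (@is_filter_lim_locally_unique C_AbsRing (AbsRing_NormedModule C_AbsRing)) in Hx. subst x.
  intros eps. pose proof (cond_pos eps) as Heps.
  assert (Hd : 0 < eps * 2 * r^3) by (apply Rmult_lt_0_compat; [lra| apply pow_lt; lra]).
  exists (mkposreal _ Hd). intros v Hv.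
  change (Cmod (v - w) < eps * 2 * r^3) in Hv.
  change (Cmod ((Csqrt v - Csqrt w) - (v - w) * / (RtoC 2 * Csqrt w))%C <= eps * Cmod (v - w)).
  set (s := Csqrt w) in *. set (t := Csqrt v).
  assert (Hs0 : s <> RtoC 0).
  { intro E. unfold r in Hr. fold s in Hr. rewrite E in Hr. simpl in Hr. lra. }
  assert (Ev : v = (t * t)%C) by (symmetry; apply Csqrt_sq).
  assert (Ew : w = (s * s)%C) by (symmetry; apply Csqrt_sq).
  assert (E1 : ((t - s) - (v - w) * / (RtoC 2 * s) = - ((t - s) * (t - s)) * / (RtoC 2 * s))%C).
  { rewrite Ev, Ew. field. exact Hs0. }
  assert (E2 : (v - w = (t - s) * (t + s))%C) by (rewrite Ev, Ew; ring).
  rewrite E1. rewrite E2 in Hv |- *.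
  rewrite !Cmod_mult in *. rewrite Cmod_opp, Cmod_mult, Cmod_inv, Cmod_mult by (apply Cmult_neq_0; auto; intro E; injection E; lra).
  rewrite Cmod_R, Rabs_pos_eq by lra.
  set (D := Cmod (t - s)) in *. set (T := Cmod (t + s)) in *.
  assert (HS : r <= Cmod s).
  { pose proof (re_le_Cmod s). apply Rabs_le_between in H. unfold r. lra. }
  assert (HT : r <= T).
  { pose proof (re_le_Cmod (t + s)%C). apply Rabs_le_between in H.
    assert (Re (t + s)%C = Re t + Re s) by (destruct t, s; reflexivity).
    pose proof (Csqrt_re_nonneg v). fold t in H1. unfold T, r. fold s. lra. }
  assert (HD : 0 <= D) by apply Cmod_ge_0.
  assert (Hsp : 0 < Cmod s) by lra.
  apply Rle_trans with (D * D / (2 * r)).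
  { unfold Rdiv. apply Rmult_le_compat_l; [nra|]. apply Rinv_le_contravar; nra. }
  apply Rle_trans with (D * T * (D * T) / (2 * r^3)).
  { unfold Rdiv. apply Rle_trans with (D * D * (T * T) * / (2 * r^3)).
    - replace (D * D * / (2 * r)) with (D * D * (r * r) * / (2 * r^3)) by (field; lra).
      apply Rmult_le_compat_r. { left. apply Rinv_0_lt_compat. nra. }
      apply Rmult_le_compat_l; nra.
    - right. ring. }
  replace (D * T * (D * T) / (2 * r ^ 3)) with ((D * T * / (2 * r^3)) * (D * T)) by (field; lra).
  apply Rmult_le_compat_r; [nra|].
  apply Rle_trans with ((eps * 2 * r^3) * / (2 * r^3)).
  - apply Rmult_le_compat_r; [left; apply Rinv_0_lt_compat; nra | lra].
  - right. field. lra.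
Qed.

Lemma Csum_ext_le (f g : nat -> C) n :
  (forall k, (k <= n)%nat -> f k = g k) -> Csum f n = Csum g n.
Proof.
  induction n; intros H; simpl.
  - apply H; lia.
  - rewrite IHn by (intros; apply H; lia). rewrite H by lia. reflexivity.
Qed.

Lemma Csum_plus (f g : nat -> C) n :
  Csum (fun k => f k + g k)%C n = (Csum f n + Csum g n)%C.
Proof. induction n; simpl; [reflexivity| rewrite IHn; ring]. Qed.

Lemma Csum_scal (c : C) (f : nat -> C) n :
  Csum (fun k => c * f k)%C n = (c * Csum f n)%C.
Proof. induction n; simpl; [reflexivity| rewrite IHn; ring]. Qed.

Lemma Csum_shift (f : nat -> C) m :
  Csum f (S m) = (f O + Csum (fun j => f (S j)) m)%C.
Proof. induction m; simpl in *; [reflexivity| rewrite IHm; ring]. Qed.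

Lemma is_derive_eq {f : C -> C} {x l l'} :
  is_derive f x l -> l = l' -> is_derive f x l'.
Proof. intros H E; subst; exact H. Qed.

Lemma Cmult_comm' : forall n m : C_AbsRing, mult n m = mult m n.
Proof. intros; apply Cmult_comm. Qed.

Lemma conv1 f x l: @is_derive C_AbsRing C_NormedModule f x l -> @is_derive C_AbsRing (AbsRing_NormedModule C_AbsRing) f x l.
Proof. intro H. destruct H as [[H1 H2 H3] H4]. split. split. exact H1. exact H2. exact H3. exact H4. Qed.
Lemma conv2 f x l: @is_derive C_AbsRing (AbsRing_NormedModule C_AbsRing) f x l -> @is_derive C_AbsRing C_NormedModule f x l.
Proof. intro H. destruct H as [[H1 H2 H3] H4]. split. split. exact H1. exact H2. exact H3. exact H4. Qed.

Lemma is_derive_multC (f g : C -> C) x df dg :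
  @is_derive C_AbsRing C_NormedModule f x df ->
  @is_derive C_AbsRing C_NormedModule g x dg ->
  @is_derive C_AbsRing C_NormedModule (fun y => f y * g y)%C x (df * g x + f x * dg)%C.
Proof.
  intros Hf Hg. apply conv2.
  exact (is_derive_mult f g x df dg (conv1 _ _ _ Hf) (conv1 _ _ _ Hg) Cmult_comm').
Qed.

Lemma is_derive_constC (a : C) x :
  @is_derive C_AbsRing C_NormedModule (fun _ => a) x (RtoC 0).
Proof. exact (is_derive_const a x). Qed.

Lemma is_derive_affine (g : C -> C) x dg (a b : C) :
  is_derive g x dg -> is_derive (fun y => a * g y + b)%C x (a * dg)%C.
Proof.
  intros H.
  assert (H1 := is_derive_multC (fun _ => a) g x _ dg (is_derive_constC a x) H).
  assert (H2 := is_derive_plus _ _ x _ _ H1 (is_derive_constC b x)).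
  eapply is_derive_eq. exact H2.
  change ((0 * g x + a * dg) + 0 = a * dg)%C. ring.
Qed.

Lemma is_derive_Cpow (u : C -> C) x du k :
  is_derive u x du ->
  is_derive (fun y => Cpow (u y) k) x (RtoC (INR k) * Cpow (u x) (k - 1) * du)%C.
Proof.
  intros H. induction k.
  - eapply is_derive_eq. apply (is_derive_ext (fun _ => RtoC 1)); [reflexivity| apply is_derive_constC]. simpl. ring.
  - simpl Cpow.
    assert (H1 := is_derive_multC u (fun y => Cpow (u y) k) x _ _ H IHk).
    eapply is_derive_eq. exact H1.
    rewrite S_INR, RtoC_plus. replace (S k - 1)%nat with k by lia.
    destruct k.
    + simpl. ring.
    + replace (S k - 1)%nat with k by lia. simpl Cpow. match goal with |- ?a = ?b => change (@eq C a b) end. ring.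
Qed.

Lemma is_derive_poly (c : nat -> C) (u : C -> C) x du n :
  is_derive u x du ->
  is_derive (fun y => Csum (fun k => c k * Cpow (u y) k)%C n) x
    (Csum (fun k => c k * (RtoC (INR k) * Cpow (u x) (k - 1) * du))%C n).
Proof.
  intros H. induction n.
  - simpl. eapply is_derive_eq.
    apply (is_derive_multC (fun _ => c O) (fun y => Cpow (u y) 0) x _ _ (is_derive_constC _ x) (is_derive_Cpow u x du 0 H)).
    simpl. cring.
  - simpl. apply (is_derive_plus _ _ x _ _ IHn).
    eapply is_derive_eq.
    apply (is_derive_multC (fun _ => c (S n)) (fun y => Cpow (u y) (S n)) x _ _ (is_derive_constC _ x) (is_derive_Cpow u x du (S n) H)).
    simpl. cring.
Qed.

Lemma RtoC_neq0 (r : R) : r <> 0 -> RtoC r <> RtoC 0.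
Proof. intros H E. injection E. auto. Qed.

Lemma poch_S_left (l : C) k : poch l (S k) = (l * poch (l + RtoC 1) k)%C.
Proof.
  induction k.
  - simpl. cring.
  - change (poch l (S (S k))) with (poch l (S k) * (l + RtoC (INR (S k))))%C.
    rewrite IHk. simpl poch. rewrite S_INR, RtoC_plus. cring.
Qed.

Lemma poch_neq0 (l : C) k : 0 < Re l -> poch l k <> RtoC 0.
Proof.
  intros H. induction k.
  - simpl. apply RtoC_neq0. lra.
  - simpl. apply Cmult_neq_0; auto.
    intro E. assert (Re (l + RtoC (INR k))%C = Re (RtoC 0)) by (rewrite E; reflexivity).
    destruct l; simpl in *. pose proof (pos_INR k). lra.
Qed.

Definition jc (alpha beta : C) (n k : nat) : C :=
  Cdiv (Cmult (poch (Cplus 1 alpha) n) (poch (Cplus (Cplus 1 alpha) beta + RtoC (INR n)) k))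
       (Cmult (Cmult (RtoC (INR (fact k))) (RtoC (INR (fact (n - k)))))
              (poch (Cplus 1 alpha) k)).

Lemma jacobi2_eq alpha beta n z w :
  jacobi2 alpha beta n z w = Csum (fun k => jc alpha beta n k * Cpow (Cdiv (Cminus z (Csqrt w)) 2) k)%C n.
Proof. reflexivity. Qed.

Theorem mainTheorem1 (alpha beta : C) (n : nat) (z w : C) :
  (-1 < Re alpha)%R -> (-1 < Re beta)%R -> (1 <= n)%nat ->
  (Cmod z < 1)%R -> (Cmod w < 1)%R ->
  ~ (Im w = 0 /\ (-1 < Re w <= 0)%R) ->
  exists dz dw : C,
    is_derive (fun z' : C => jacobi2 alpha beta n z' w) z dz /\
    is_derive (fun w' : C => jacobi2 alpha beta n z w') w dw /\
    (dz + Csqrt w * dw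
      - (1 + alpha + beta + RtoC (INR n)) / 4
        * jacobi2 (1 + alpha) (1 + beta) (n - 1) z w = 0)%C.
Proof.
  intros Ha Hb Hn Hz Hw Hcut.
  assert (Hr : 0 < Re (Csqrt w)).
  { apply Csqrt_re_pos. intros [H1 H2]. apply Hcut. split; auto. split; auto.
    pose proof (re_le_Cmod w). apply Rabs_le_between in H. lra. }
  set (s := Csqrt w) in *.
  assert (Hs0 : s <> RtoC 0).
  { intro E. rewrite E in Hr. simpl in Hr. lra. }
  set (u0 := Cdiv (Cminus z s) 2).
  set (c := jc alpha beta n).
  exists (Csum (fun k => c k * (RtoC (INR k) * Cpow u0 (k - 1) * / RtoC 2))%C n).
  exists (Csum (fun k => c k * (RtoC (INR k) * Cpow u0 (k - 1) * (- / RtoC 2 * / (RtoC 2 * s))))%C n).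
  split; [|split].
  - eapply is_derive_ext. { intros t. symmetry. apply jacobi2_eq. }
    apply (is_derive_poly c (fun z' => Cdiv (Cminus z' s) 2)).
    eapply is_derive_ext. { intros t. instantiate (1 := fun t => (/ RtoC 2 * t + (- s / RtoC 2))%C).
      simpl. unfold Cdiv, Cminus. cring. }
    eapply is_derive_eq. apply is_derive_affine. apply conv2. apply is_derive_id.
    change (/ RtoC 2 * RtoC 1 = / RtoC 2)%C. cring.
  - eapply is_derive_ext. { intros t. symmetry. apply jacobi2_eq. }
    eapply is_derive_eq.
    apply (is_derive_poly c (fun w' => Cdiv (Cminus z (Csqrt w')) 2)).
    eapply is_derive_ext. { intros t. instantiate (1 := fun t => (- / RtoC 2 * Csqrt t + z / RtoC 2)%C).
      simpl. unfold Cdiv, Cminus. cring. }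
    apply is_derive_affine. apply is_derive_Csqrt. exact Hr.
    reflexivity.
  - destruct n as [|m]; [lia|]. replace (S m - 1)%nat with m by lia.
    rewrite jacobi2_eq.
    set (P := (fun k => c k * RtoC (INR k) * Cpow u0 (k - 1))%C).
    assert (E1 : (Csum (fun k => c k * (RtoC (INR k) * Cpow u0 (k - 1) * / RtoC 2))%C (S m) +
      s * Csum (fun k => c k * (RtoC (INR k) * Cpow u0 (k - 1) * (- / RtoC 2 * / (RtoC 2 * s))))%C (S m)
      = / RtoC 4 * Csum P (S m))%C).
    { rewrite <- !Csum_scal, <- Csum_plus. apply Csum_ext_le. intros k _. unfold P.
      field. exact Hs0. }
    rewrite E1. clear E1.
    rewrite Csum_shift.
    assert (E0 : P O = RtoC 0) by (unfold P; simpl; cring).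
    rewrite E0.

    assert (E2 : Csum (fun j => P (S j)) m = ((1 + alpha + beta + RtoC (INR (S m))) *
       Csum (fun k => jc (1 + alpha) (1 + beta) m k * Cpow u0 k) m)%C).
    { rewrite <- Csum_scal. apply Csum_ext_le. intros j Hj. unfold P, c, jc.
      replace (S j - 1)%nat with j by lia. replace (S m - S j)%nat with (m - j)%nat by lia.
      rewrite !poch_S_left.
      replace (1 + alpha + RtoC 1)%C with (1 + (1 + alpha))%C by cring.
      replace (1 + alpha + beta + RtoC (INR (S m)) + RtoC 1)%C with (1 + (1 + alpha) + (1 + beta) + RtoC (INR m))%C
        by (rewrite S_INR, RtoC_plus; cring).
      rewrite fact_simpl, mult_INR, RtoC_mult.
      assert (N1 : poch (1 + (1 + alpha)) j <> RtoC 0) by (apply poch_neq0; destruct alpha; simpl in *; lra).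
      assert (N2 : (1 + alpha)%C <> RtoC 0) by (intro E; assert (Re (1 + alpha)%C = Re (RtoC 0)) by (rewrite E; reflexivity); destruct alpha; simpl in *; lra).
      assert (N3 : RtoC (INR (S j)) <> RtoC 0) by (apply RtoC_neq0; apply not_0_INR; lia).
      assert (N4 : RtoC (INR (fact j)) <> RtoC 0) by (apply RtoC_neq0; apply INR_fact_neq_0).
      assert (N5 : RtoC (INR (fact (m - j))) <> RtoC 0) by (apply RtoC_neq0; apply INR_fact_neq_0).
      match goal with |- ?a = ?b => change (@eq C a b) end.
      field. repeat split; [exact N1|exact N5|exact N4|exact N2|exact N3]. }
    rewrite E2. fold s u0. match goal with |- ?a = ?b => change (@eq C a b) end. field.
Qed.
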